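(* Let $V$ be an indecomposable Whittaker module of type $\eta$ over $R$ with cyclic Whittaker vector $w$, and suppose $Z_V=(p(\Omega)^n)$ where $p$ is an irreducible polynomial and $n\ge 1$. Then every submodule $V'\subseteq V$ is of the form $V'=Rp(\Omega)^iw$ for some $i\in\{0,\dots,n\}$.
   Context: Let $f\in\mathbb{C}[H]$ be a polynomial. $R=R(f)$ is the associative $\mathbb{C}$-algebra generated by $E,F,H$ with relations $EF-FE=f(H)$, $HE-EH=E$, $HF-FH=-F$. Let $u\in\mathbb{C}[H]$ satisfy $f(H)=\tfrac12(u(H+1)-u(H))$ and $\Omega=2FE+u(H+1)$; the center $Z(R)$ is the polynomial ring $\mathbb{C}[\Omega]$. Let $R(E)=\mathbb{C}[E]$ and fix an algebra homomorphism $\eta:R(E)\to\mathbb{C}$ with $\eta(E)\neq0$. A vector $v$ of an $R$-module $V$ is a Whittaker vector of type $\eta$ if $Ev=\eta(E)v$; $V$ is a Whittaker module of type $\eta$ with cyclic Whittaker vector $w$ if $w$ is a Whittaker vector and $V=Rw$. $Z_V=\mathrm{Ann}_R(V)\cap Z(R)$. *)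

(* Defs.v *)
From HB Require Import structures.
From mathcomp Require Import all_boot all_order all_algebra.
From mathcomp Require Import reals complex.
Set Implicit Arguments. Unset Strict Implicit. Unset Printing Implicit Defensive.
Import Order.TTheory GRing.Theory Num.Theory.
Local Open Scope ring_scope.

(* Complex numbers are modelled as R[i] for R : realType
   (every realType is a complete archimedean real closed field). *)

Section Whittaker.
Variables (K : nzRingType) (V : lmodType K).

Definition opeval (p : {poly K}) (T : V -> V) (v : V) : V :=
  \sum_(i < size p) p`_i *: iter i T v.

Definition submod (E F H : V -> V) (S : V -> Prop) : Prop :=
  [/\ S 0, (forall x y, S x -> S y -> S (x + y)),
      (forall (a : K) x, S x -> S (a *: x)) &
      (forall x, S x -> [/\ S (E x), S (F x) & S (H x)])].

Definition gen (E F H : V -> V) (x : V) : V -> Prop :=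
  fun v => forall S, submod E F H S -> S x -> S v.

Definition Rf_relations (f : {poly K}) (E F H : V -> V) : Prop :=
  forall v, [/\ E (F v) - F (E v) = opeval f H v,
               H (E v) - E (H v) = E v &
               H (F v) - F (H v) = - F v].

Definition Omega (u : {poly K}) (E F H : V -> V) (v : V) : V :=
  2%:R *: F (E v) + opeval (u \Po ('X + 1)) H v.

Definition indecomposable (E F H : V -> V) : Prop :=
  (exists v : V, v != 0) /\
  forall A B, submod E F H A -> submod E F H B ->
    (forall v, A v -> B v -> v = 0) ->
    (forall v, exists a b, [/\ A a, B b & v = a + b]) ->
    (forall v, A v -> v = 0) \/ (forall v, B v -> v = 0).

(* V is a Whittaker module of type eta (eta(E) = e) with cyclic Whittaker vector w *)
Definition whittaker_cyclic (E F H : V -> V) (e : K) (w : V) : Prop :=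
  E w = e *: w /\ forall v, gen E F H w v.

End Whittaker.

(* Main.v *)
Require Import Defs.
From HB Require Import structures.
From mathcomp Require Import all_boot all_order all_algebra.
From mathcomp Require Import reals complex.
From mathcomp Require Import boolp.
Import Order.TTheory GRing.Theory Num.Theory.
Local Open Scope ring_scope.
Set Implicit Arguments. Unset Strict Implicit.

Section Ops.
Variables (K : numFieldType) (V : lmodType K).
Implicit Types (T S : V -> V) (v x y : V).

Definition islin (T : V -> V) := forall (a : K) x y, T (a *: x + y) = a *: T x + T y.

Lemma lin0 T : islin T -> T 0 = 0.
Proof. move=> hT; have := hT 1 0 0; rewrite scaler0 add0r scale1r => h.
by apply: (addrI (T 0)); rewrite addr0 -h. Qed.
Lemma linD T : islin T -> forall x y, T (x + y) = T x + T y.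
Proof. by move=> hT x y; have := hT 1 x y; rewrite !scale1r. Qed.
Lemma linZ T : islin T -> forall a x, T (a *: x) = a *: T x.
Proof. by move=> hT a x; rewrite -(addr0 (a *: x)) hT lin0 // addr0. Qed.
Lemma linN T : islin T -> forall x, T (- x) = - T x.
Proof. by move=> hT x; rewrite -scaleN1r linZ // scaleN1r. Qed.
Lemma linB T : islin T -> forall x y, T (x - y) = T x - T y.
Proof. by move=> hT x y; rewrite linD // linN. Qed.
Lemma lin_sum T (I : Type) (s : seq I) (G : I -> V) : islin T ->
  T (\sum_(x <- s) G x) = \sum_(x <- s) T (G x).
Proof. move=> hT; elim: s => [|a s IH]; first by rewrite !big_nil lin0.
by rewrite !big_cons linD // IH. Qed.

Lemma islin_lin (L : {linear V -> V}) : islin L.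
Proof. by move=> a x y; rewrite linearD linearZ. Qed.

Lemma iter_lin T n : islin T -> islin (iter n T).
Proof. move=> hT; elim: n => [//|n IH] a x y /=. by rewrite IH hT. Qed.

Lemma opeval_N (p : {poly K}) T v N : (size p <= N)%N ->
  opeval p T v = \sum_(i < N) p`_i *: iter i T v.
Proof.
move=> hN; rewrite /opeval (big_ord_widen N (fun i => p`_i *: iter i T v) hN).
rewrite big_mkcond; apply: eq_bigr => i _; case: ifP => // /negbT.
by rewrite -leqNgt => h; rewrite nth_default // scale0r.
Qed.

Lemma opeval0 T v : opeval 0 T v = 0.
Proof. by rewrite /opeval size_poly0 big_ord0. Qed.

Lemma opevalP (a : K) p q T v :
  opeval (a *: p + q) T v = a *: opeval p T v + opeval q T v.
Proof.
set N := maxn (size p) (size q).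
have hp : (size p <= N)%N by rewrite leq_maxl.
have hq : (size q <= N)%N by rewrite leq_maxr.
have hpq : (size (a *: p + q)%R <= N)%N.
  by apply: leq_trans (size_polyD _ _) _; rewrite geq_max (leq_trans (size_scale_leq _ _)).
rewrite (@opeval_N p T v N hp) (@opeval_N q T v N hq) (@opeval_N _ T v N hpq) scaler_sumr -big_split /=.
by apply: eq_bigr => i _; rewrite coefD coefZ scalerDl scalerA.
Qed.

Lemma opevalPD p q T v : opeval (p + q) T v = opeval p T v + opeval q T v.
Proof. by have := opevalP 1 p q T v; rewrite !scale1r. Qed.
Lemma opevalPZ a p T v : opeval (a *: p) T v = a *: opeval p T v.
Proof. by have := opevalP a p 0 T v; rewrite !addr0 opeval0 addr0. Qed.
Lemma opevalPN p T v : opeval (- p) T v = - opeval p T v.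
Proof. by have := opevalPZ (-1) p T v; rewrite !scaleN1r. Qed.
Lemma opevalPB p q T v : opeval (p - q) T v = opeval p T v - opeval q T v.
Proof. by rewrite opevalPD opevalPN. Qed.
Lemma opeval_sumP (I : Type) (s : seq I) (G : I -> {poly K}) T v :
  opeval (\sum_(x <- s) G x) T v = \sum_(x <- s) opeval (G x) T v.
Proof. elim: s => [|a s IH]; first by rewrite !big_nil opeval0.
by rewrite !big_cons opevalPD IH. Qed.

Lemma opevalC c T v : opeval c%:P T v = c *: v.
Proof. by rewrite (@opeval_N _ T v 1 (size_polyC_leq1 c)) big_ord1 coefC. Qed.

Lemma opeval_lin p T : islin T -> islin (opeval p T).
Proof.
move=> hT a x y; rewrite /opeval scaler_sumr -big_split; apply: eq_bigr => i _ /=.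
by rewrite iter_lin // scalerDr !scalerA mulrC.
Qed.

Lemma opevalMX p T v : opeval (p * 'X) T v = opeval p T (T v).
Proof.
have h : (size (p * 'X)%R <= (size p).+1)%N.
  by apply: leq_trans (size_polyMleq _ _) _; rewrite size_polyX addn2.
rewrite (@opeval_N _ T v _ h) big_ord_recl coefMX eqxx scale0r add0r.
by apply: eq_bigr => i _; rewrite coefMX /= add0n -iterS iterSr.
Qed.

Lemma opevalX T v : opeval 'X T v = T v.
Proof. by have := opevalMX 1 T v; rewrite mul1r -polyC1 opevalC scale1r. Qed.

Lemma opeval_comm p T S v : islin S -> (forall x, S (T x) = T (S x)) ->
  S (opeval p T v) = opeval p T (S v).
Proof.
move=> hS hST; rewrite /opeval lin_sum //; apply: eq_bigr => i _.
rewrite linZ //; congr (_ *: _); move: (i : nat) => k; elim: k => [//|k IH] /=.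
by rewrite hST IH.
Qed.

Lemma opevalM p q T v : islin T ->
  opeval (p * q) T v = opeval p T (opeval q T v).
Proof.
move=> hT; elim/poly_ind: p q v => [|p c IH] q v.
  by rewrite mul0r !opeval0.
rewrite mulrDl -mulrA (mulrC 'X) opevalPD IH mul_polyC opevalPZ opevalPD opevalC.
rewrite opevalMX opevalMX; congr (_ + _); congr (opeval p T _).
by rewrite opeval_comm.
Qed.

Lemma opeval_shift p T S c v : islin T -> islin S ->
  (forall x, S (T x) = T (S x) - c *: S x) ->
  S (opeval p T v) = opeval (p \Po ('X - c%:P)) T (S v).
Proof.
move=> hT hS hST; elim/poly_ind: p v => [|p d IH] v.
  by rewrite comp_poly0 !opeval0 lin0.
rewrite comp_polyD comp_polyM comp_polyX comp_polyC !opevalPD !opevalC opevalMX.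
by rewrite linD // IH linZ // hST opevalM // opevalPB opevalX opevalC.
Qed.

End Ops.

Section P.
Variable K : numFieldType.
Implicit Types (p q r g : {poly K}).

Lemma size_shift_sub r (c : K) : (size (r \Po ('X - c%:P) - r)%R <= (size r).-1)%N.
Proof.
have hs : size ('X - c%:P) = 2 by rewrite size_XsubC.
have sa : size (r \Po ('X - c%:P)) = size r by rewrite size_comp_poly2.
have la : lead_coef (r \Po ('X - c%:P)) = lead_coef r.
  by rewrite lead_coef_comp ?hs // lead_coefXsubC expr1n mulr1.
apply/leq_sizeP => j hj; rewrite coefB.
case: (ltngtP j (size r).-1) hj => //; last first.
  by move=> -> _; move: la; rewrite /lead_coef sa => ->; rewrite subrr.
move=> hlt _; have hj : (size r <= j)%N by move: hlt; case: (size r).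
by rewrite !nth_default ?subrr // sa.
Qed.

Lemma coef_XsubC1_exp d : (('X - 1) ^+ d.+1 : {poly K})`_d = - (d.+1)%:R.
Proof.
have hm k : (('X - 1) ^+ k : {poly K})`_k = 1.
  have := size_exp_XsubC k (1 : K); rewrite polyC1 => hs.
  have := monic_exp k (monicXsubC (1:K)); rewrite polyC1.
  by move/monicP; rewrite /lead_coef hs.
elim: d => [|d IH]; first by rewrite expr1 coefB coefX coef1 sub0r.
rewrite exprS mulrBl mul1r mulrC coefB coefMX /= IH hm.
by rewrite -opprD -mulrSr.
Qed.

Lemma coef_shift g d : (size g <= d.+2)%N ->
  (g \Po ('X - 1%:P))`_d = g`_d - (d.+1)%:R * g`_d.+1.
Proof.
move=> hg; set r := g - g`_d.+1 *: 'X^(d.+1).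
have hr : (size r <= d.+1)%N.
  apply/leq_sizeP => j hj; rewrite /r coefB coefZ coefXn.
  case: (ltngtP j d.+1) hj => //.
    by move=> hlt _; rewrite nth_default ?mulr0 ?subr0 // (leq_trans hg).
  by move=> -> _; rewrite mulr1 subrr.
have eg : g = g`_d.+1 *: 'X^(d.+1) + r by rewrite /r addrC subrK.
have h1 : (r \Po ('X - 1%:P))`_d = r`_d.
  have := size_shift_sub r 1; move/leq_sizeP => /(_ d) h.
  by apply/eqP; rewrite -subr_eq0 -coefB h //; move: hr; case: (size r).
rewrite {1}eg comp_polyD comp_polyZ comp_Xn_poly coefD coefZ h1 polyC1 coef_XsubC1_exp.
by rewrite /r coefB coefZ coefXn (ltn_eqF (ltnSn d)) mulr0 subr0 mulrN mulrC addrC.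
Qed.

Lemma dvdp_irr_pow (p g : {poly K}) n : irreducible_poly p -> g %| p ^+ n ->
  exists j, (j <= n)%N /\ g %= p ^+ j.
Proof.
move=> hp; elim: n g => [|n IH] g.
  rewrite expr0 dvdp1 => /size_poly1P [c c0 ->]; exists 0%N; split => //.
  by rewrite expr0 -polyC1 eqp_sym; apply/eqpP; exists (c, 1); rewrite ?c0 ?oner_eq0 // scale1r -mul_polyC mulr1.
have p0 : p != 0 by case: hp => h _; apply: contraTneq h => ->; rewrite size_poly0.
case pg: (p %| g).
  move=> hd; have eg : g = (g %/ p) * p by rewrite divpK.
  have : g %/ p %| p ^+ n.
    by rewrite -(dvdp_mul2l (g %/ p) (p ^+ n) p0) mulrC -eg -exprS.
  move/IH => [j [hj he]]; exists j.+1; split => //.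
  by rewrite eg exprS mulrC; apply: eqp_mull.
move=> hd; have cop : coprimep p g.
  case: hp => _ /(_ (gcdp p g)) h; rewrite /coprimep; apply/negPn/negP => ng.
  have := h ng (dvdp_gcdl p g); rewrite eqp_sym => /eqp_dvdl ep.
  by move: pg; rewrite ep dvdp_gcdr.
have : g %| p ^+ n.
  by move: hd; rewrite exprS Gauss_dvdpr // coprimep_sym.
move/IH => [j [hj he]]; exists j; split => //; exact: leqW.
Qed.
End P.

Section Mod.
Variables (K : numFieldType) (V : lmodType K) (E F H : V -> V).
Hypotheses (hE : islin E) (hF : islin F) (hH : islin H).
Variables (f u : {poly K}).
Hypothesis hfu : f = 2%:R^-1 *: (u \Po ('X + 1) - u).
Hypothesis hrel : Rf_relations f E F H.
Implicit Types (x y v : V).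

Let U := u \Po ('X + 1).
Let Om := Omega u E F H.

Lemma subr_swap (Z : zmodType) (a b c : Z) : a - b = c -> b = a - c.
Proof. by move=> <-; rewrite opprB addrC subrK. Qed.
Lemma subr_add (Z : zmodType) (a b c : Z) : a - b = c -> a = b + c.
Proof. by move=> <-; rewrite addrC subrK. Qed.

Lemma EH x : E (H x) = H (E x) - 1 *: E x.
Proof. by have [_ h _] := hrel x; rewrite scale1r (subr_swap h). Qed.
Lemma FH x : F (H x) = H (F x) - (-1) *: F x.
Proof. by have [_ _ h] := hrel x; rewrite scaleN1r (subr_swap h). Qed.
Lemma EF x : E (F x) = F (E x) + opeval f H x.
Proof. by have [h _ _] := hrel x; rewrite (subr_add h). Qed.
Lemma HE x : H (E x) = E (H x) + E x.
Proof. by have [_ h _] := hrel x; rewrite (subr_add h). Qed.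
Lemma HF x : H (F x) = F (H x) - F x.
Proof. by have [_ _ h] := hrel x; rewrite (subr_add h). Qed.

Lemma two_f : 2%:R *: f = U - u.
Proof. by rewrite hfu scalerA mulfV ?scale1r // pnatr_eq0. Qed.

Lemma OmE x : Om x = 2%:R *: F (E x) + opeval U H x.
Proof. by []. Qed.

Lemma Om_lin : islin Om.
Proof.
move=> a x y; rewrite !OmE hE linD // linZ // (opeval_lin _ hH).
by rewrite scalerDr scalerA mulrC -scalerA addrACA scalerDr.
Qed.

Lemma HOm x : H (Om x) = Om (H x).
Proof.
rewrite !OmE (linD hH) (linZ hH) HF HE (linD hF) addrK.
by rewrite (opeval_comm _ _ hH).
Qed.

Lemma EOm x : E (Om x) = Om (E x).
Proof.
rewrite !OmE (linD hE) (linZ hE) EF scalerDr -addrA; congr (_ + _).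
rewrite (opeval_shift _ _ hH hE EH) -comp_polyA.
have -> : ('X + 1) \Po ('X - 1%:P) = 'X :> {poly K}.
  by rewrite comp_polyD comp_polyX -polyC1 comp_polyC subrK.
by rewrite comp_polyXr -opevalPZ two_f -opevalPD subrK.
Qed.

Lemma FOm x : F (Om x) = Om (F x).
Proof.
rewrite !OmE (linD hF) (linZ hF) EF (linD hF) scalerDr -addrA; congr (_ + _).
rewrite (opeval_shift _ _ hH hF FH) (opeval_shift _ _ hH hF FH).
rewrite -opevalPZ -opevalPD -comp_polyZ two_f comp_polyB.
have -> : 'X - (-1)%:P = 'X + 1 :> {poly K} by rewrite polyCN opprK polyC1.
by rewrite -/U subrK.
Qed.


Section Sub.
Variable S : V -> Prop.
Hypothesis hS : submod E F H S.

Lemma subS0 : S 0. Proof. by case: hS. Qed.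
Lemma subSD x y : S x -> S y -> S (x + y). Proof. by case: hS => _ h _ _; apply: h. Qed.
Lemma subSZ a x : S x -> S (a *: x). Proof. by case: hS => _ _ h _; apply: h. Qed.
Lemma subSB x y : S x -> S y -> S (x - y).
Proof. by move=> hx hy; apply: subSD => //; rewrite -scaleN1r; apply: subSZ. Qed.
Lemma subSE x : S x -> S (E x). Proof. by case: hS => _ _ _ h /h []. Qed.
Lemma subSF x : S x -> S (F x). Proof. by case: hS => _ _ _ h /h []. Qed.
Lemma subSH x : S x -> S (H x). Proof. by case: hS => _ _ _ h /h []. Qed.
Lemma subS_sum (I : Type) (s : seq I) (G : I -> V) :
  (forall i, S (G i)) -> S (\sum_(i <- s) G i).
Proof. move=> h; elim: s => [|a s IH]; first by rewrite big_nil; apply: subS0.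
by rewrite big_cons; apply: subSD. Qed.
Lemma subS_opeval (T : V -> V) p x : (forall y, S y -> S (T y)) -> S x ->
  S (opeval p T x).
Proof.
move=> hT hx; rewrite /opeval; elim/big_ind: _ => //; first exact: subS0.
  exact: subSD.
move=> i _; apply: subSZ; move: (i : nat) => k; elim: k => //= k IH; exact: hT.
Qed.
Lemma subSOm x : S x -> S (Om x).
Proof. move=> hx; rewrite OmE; apply: subSD; first by apply/subSZ/subSF/subSE.
by apply: subS_opeval => //; apply: subSH. Qed.
End Sub.

Lemma gen_submod z : submod E F H (gen E F H z).
Proof.
split.
- by move=> S hS _; apply: subS0.
- by move=> x y hx hy S hS hz; apply: subSD => //; [apply: hx | apply: hy].
- by move=> a x hx S hS hz; apply: subSZ => //; apply: hx.
- move=> x hx; split=> S hS hz.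
  + by apply: subSE => //; apply: hx.
  + by apply: subSF => //; apply: hx.
  + by apply: subSH => //; apply: hx.
Qed.
Lemma gen_self z : gen E F H z z. Proof. by move=> S _. Qed.

Variables (e : K) (w : V).
Hypotheses (he : e != 0) (hw : E w = e *: w) (hgen : forall v, gen E F H w v).

Definition mm (g q : {poly K}) := opeval g H (opeval q Om w).
Definition Sp v := exists s : seq ({poly K} * {poly K}), v = \sum_(x <- s) mm x.1 x.2.

Lemma Sp_single g q : Sp (mm g q).
Proof. by exists [:: (g, q)]; rewrite big_seq1. Qed.
Lemma Sp_add x y : Sp x -> Sp y -> Sp (x + y).
Proof. by move=> [s1 ->] [s2 ->]; exists (s1 ++ s2); rewrite big_cat. Qed.
Lemma Sp_scale a x : Sp x -> Sp (a *: x).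
Proof.
move=> [s ->]; exists (map (fun y : {poly K} * {poly K} => (a *: y.1, y.2)) s).
by rewrite big_map scaler_sumr; apply: eq_bigr => i _; rewrite /mm opevalPZ.
Qed.
Lemma Sp_sum (T : V -> V) : islin T -> (forall g q, Sp (T (mm g q))) ->
  forall x, Sp x -> Sp (T x).
Proof.
move=> hT h x [s ->]; rewrite lin_sum //; elim: s => [|a s IH].
  by rewrite big_nil; exists [::]; rewrite big_nil.
by rewrite big_cons; apply: Sp_add.
Qed.

Lemma Om_linH : islin Om. Proof. exact: Om_lin. Qed.

Lemma Ew_q q : E (opeval q Om w) = e *: opeval q Om w.
Proof. by rewrite (opeval_comm _ _ hE EOm) hw (linZ (opeval_lin q Om_lin)). Qed.

Lemma Fw : F w = (2%:R * e)^-1 *: (Om w - opeval U H w).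
Proof.
rewrite OmE hw (linZ hF) addrK !scalerA mulVf ?scale1r //.
by rewrite mulf_neq0 // pnatr_eq0.
Qed.

Lemma Sp_submod : submod E F H Sp.
Proof.
split.
- by exists [::]; rewrite big_nil.
- exact: Sp_add.
- exact: Sp_scale.
move=> x hx; split.
- apply: Sp_sum hx => // g q; rewrite /mm (opeval_shift _ _ hH hE EH) Ew_q.
  by rewrite (linZ (opeval_lin _ hH)); apply: Sp_scale; apply: Sp_single.
- apply: Sp_sum hx => // g q; rewrite /mm (opeval_shift _ _ hH hF FH).
  rewrite (opeval_comm _ _ hF FOm) Fw (linZ (opeval_lin _ Om_lin)).
  rewrite (linB (opeval_lin _ Om_lin)) -opevalMX.
  have hc : opeval q Om (opeval U H w) = opeval U H (opeval q Om w).
    symmetry; apply: opeval_comm; first exact: opeval_lin.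
    by move=> y; rewrite (opeval_comm _ _ Om_lin) // => t; rewrite HOm.
  rewrite hc.
  rewrite (linZ (opeval_lin _ hH)) (linB (opeval_lin _ hH)) -(opevalM _ _ _ hH).
  by apply: Sp_scale; apply: Sp_add; [apply: Sp_single | rewrite -scaleN1r; apply/Sp_scale/Sp_single].
- apply: Sp_sum hx => // g q; rewrite /mm (opeval_comm _ _ hH) // -opevalMX.
  exact: Sp_single.
Qed.

Lemma Sp_all v : Sp v.
Proof.
apply: hgen; first exact: Sp_submod.
by exists [:: (1, 1)]; rewrite big_seq1 /mm -polyC1 !opevalC !scale1r.
Qed.

Definition Lm (d : nat) (s : seq ({poly K} * {poly K})) :=
  \sum_(x <- s) x.1`_d *: x.2.

Lemma Lm_cons d a s : Lm d (a :: s) = a.1`_d *: a.2 + Lm d s.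
Proof. by rewrite /Lm big_cons. Qed.

Lemma sum_lead0 s : all (fun x : {poly K} * {poly K} => size x.1 <= 1)%N s ->
  \sum_(x <- s) mm x.1 x.2 = opeval (Lm 0 s) Om w.
Proof.
elim: s => [|a s IH]; first by rewrite big_nil /Lm big_nil opeval0.
move=> /= /andP [ha hs]; rewrite big_cons IH // Lm_cons opevalPD opevalPZ.
by rewrite /mm {1}(size1_polyC ha) opevalC.
Qed.

Lemma sum_zero s : all (fun x : {poly K} * {poly K} => size x.1 <= 0)%N s ->
  \sum_(x <- s) mm x.1 x.2 = 0.
Proof.
elim: s => [|a s IH]; first by rewrite big_nil.
move=> /= /andP [ha hs]; rewrite big_cons IH // addr0.
by move: ha; rewrite size_poly_leq0 => /eqP ->; rewrite /mm opeval0.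
Qed.

Definition shiftE (x : {poly K} * {poly K}) := (e *: (x.1 \Po ('X - 1%:P) - x.1), x.2).

Lemma sum_shiftE s : \sum_(x <- map shiftE s) mm x.1 x.2 =
  E (\sum_(x <- s) mm x.1 x.2) - e *: \sum_(x <- s) mm x.1 x.2.
Proof.
elim: s => [|a s IH]; first by rewrite !big_nil lin0 // scaler0 subrr.
rewrite /= !big_cons IH (linD hE) scalerDr opprD addrACA; congr (_ + _).
rewrite /mm /shiftE /= opevalPZ opevalPB scalerBr (opeval_shift _ _ hH hE EH) Ew_q.
by rewrite (linZ (opeval_lin _ hH)).
Qed.

Lemma size_shiftE d s : all (fun x : {poly K} * {poly K} => size x.1 <= d.+2)%N s ->
  all (fun x : {poly K} * {poly K} => size x.1 <= d.+1)%N (map shiftE s).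
Proof.
elim: s => [//|a s IH] /= /andP [ha hs]; rewrite IH // andbT.
apply: leq_trans (size_scale_leq _ _) _; apply: leq_trans (size_shift_sub _ _) _.
by move: ha; case: (size a.1).
Qed.

Lemma Lm_shiftE d s : all (fun x : {poly K} * {poly K} => size x.1 <= d.+2)%N s ->
  Lm d (map shiftE s) = (- (e * (d.+1)%:R)) *: Lm d.+1 s.
Proof.
elim: s => [|a s IH]; first by rewrite /Lm !big_nil scaler0.
move=> /= /andP [ha hs]; rewrite !Lm_cons IH // scalerDr; congr (_ + _).
rewrite /shiftE /= coefZ coefB coef_shift // scalerA; congr (_ *: _).
by rewrite addrAC subrr add0r mulrN mulNr mulrA.
Qed.

Definition cutd (d : nat) (x : {poly K} * {poly K}) := (x.1 - x.1`_d *: 'X^d, x.2).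

Lemma sum_cutd d s : \sum_(x <- map (cutd d) s) mm x.1 x.2 =
  \sum_(x <- s) mm x.1 x.2 - opeval 'X^d H (opeval (Lm d s) Om w).
Proof.
elim: s => [|a s IH].
  by rewrite !big_nil /Lm big_nil opeval0 lin0 ?subrr //; apply: opeval_lin.
rewrite /= !big_cons IH Lm_cons opevalPD opevalPZ (linD (opeval_lin _ hH)).
rewrite opprD addrACA; congr (_ + _).
by rewrite /mm /cutd /= opevalPB opevalPZ (linZ (opeval_lin _ hH)).
Qed.

Lemma size_cutd d s : all (fun x : {poly K} * {poly K} => size x.1 <= d.+1)%N s ->
  all (fun x : {poly K} * {poly K} => size x.1 <= d)%N (map (cutd d) s).
Proof.
elim: s => [//|a s IH] /= /andP [ha hs]; rewrite IH // andbT.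
apply/leq_sizeP => j hj; rewrite coefB coefZ coefXn.
case: (ltngtP j d) hj => //.
  by move=> hlt _; rewrite nth_default ?mulr0 ?subr0 // (leq_trans ha).
by move=> -> _; rewrite mulr1 subrr.
Qed.

Section Vp.
Variable V' : V -> Prop.
Hypothesis hV' : submod E F H V'.

Lemma lead_in d s : all (fun x : {poly K} * {poly K} => size x.1 <= d.+1)%N s ->
  V' (\sum_(x <- s) mm x.1 x.2) -> V' (opeval (Lm d s) Om w).
Proof.
elim: d s => [|d IH] s hs hv; first by rewrite -sum_lead0.
have hs' := size_shiftE hs.
have := IH _ hs'; rewrite sum_shiftE Lm_shiftE // opevalPZ => /(_ _) h.
have : V' ((- (e * (d.+1)%:R))^-1 *: ((- (e * (d.+1)%:R)) *: opeval (Lm d.+1 s) Om w)).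
  apply: subSZ => //; apply: h; apply: subSB => //; first exact: subSE.
  exact: subSZ.
rewrite scalerA mulVf ?scale1r //.
by rewrite oppr_eq0 mulf_neq0 // pnatr_eq0.
Qed.

Lemma cut_in (P : {poly K}) (hI : forall q, V' (opeval q Om w) -> P %| q) d s :
  all (fun x : {poly K} * {poly K} => size x.1 <= d)%N s ->
  V' (\sum_(x <- s) mm x.1 x.2) ->
  gen E F H (opeval P Om w) (\sum_(x <- s) mm x.1 x.2).
Proof.
set z := opeval P Om w; have hG := gen_submod z.
elim: d s => [|d IH] s hs hv.
  by rewrite sum_zero //; apply: subS0.
have hy := lead_in hs hv.
have Gy : gen E F H z (opeval (Lm d s) Om w).
  rewrite -(divpK (hI _ hy)) (opevalM _ _ _ Om_lin).
  apply: (subS_opeval hG); [by move=> y; apply: subSOm | exact: gen_self].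
set zz := opeval 'X^d H (opeval (Lm d s) Om w).
have Gzz : gen E F H z zz by apply: (subS_opeval hG) => // y; apply: subSH.
have Vzz : V' zz by apply: (subS_opeval hV') => // y; apply: subSH.
have := IH _ (size_cutd hs); rewrite sum_cutd => /(_ (subSB hV' hv Vzz)) h.
by rewrite -(subrK zz (\sum_(x <- s) mm x.1 x.2)); apply: (subSD hG).
Qed.

Variables (p : {poly K}) (n : nat).
Hypothesis hp : irreducible_poly p.
Hypothesis hZ : forall q, p ^+ n %| q -> forall v, opeval q Om v = 0.

Lemma J_lin a b q1 q2 : V' (opeval q1 Om w) -> V' (opeval q2 Om w) ->
  V' (opeval (a * q1 + b * q2) Om w).
Proof.
move=> h1 h2; rewrite opevalPD !(opevalM _ _ _ Om_lin).
by apply: subSD => //; apply: (subS_opeval hV') => // y; apply: subSOm.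
Qed.

Lemma J_eqp q1 q2 : q1 %= q2 -> V' (opeval q1 Om w) -> V' (opeval q2 Om w).
Proof.
move=> /eqpP [[c1 c2] /= /andP [c10 c20] hc] h.
have -> : q2 = (c2^-1 * c1) *: q1 by rewrite -scalerA hc scalerA mulVf ?scale1r.
by rewrite opevalPZ; apply: subSZ.
Qed.

Lemma main_sec : exists i, (i <= n)%N /\
  forall v, V' v <-> gen E F H (opeval (p ^+ i) Om w) v.
Proof.
have hn0 : V' (opeval (p ^+ n) Om w) by rewrite hZ //; apply: subS0.
have exP : exists i, `[< V' (opeval (p ^+ i) Om w) >] by exists n; apply/asboolP.
case: (ex_minnP exP) => i /asboolP Pi Imin.
have hin : (i <= n)%N by apply: Imin; apply/asboolP.
have hI : forall q, V' (opeval q Om w) -> p ^+ i %| q.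
  move=> q hq; have [[a b] hab] := Bezoutp q (p ^+ n).
  have hg : V' (opeval (gcdp q (p ^+ n)) Om w) by apply: (J_eqp hab); apply: J_lin.
  have [j [hj hgj]] := dvdp_irr_pow hp (dvdp_gcdr q (p ^+ n)).
  have hij : (i <= j)%N by apply: Imin; apply/asboolP; apply: (J_eqp hgj hg).
  apply: dvdp_trans (dvdp_exp2l p hij) _.
  by rewrite -(eqp_dvdl _ hgj) dvdp_gcdl.
exists i; split => // v; split.
  move=> hv; have [s hs] := Sp_all v; rewrite hs in hv *.
  apply: (cut_in hI (d := \max_(x <- s) size x.1)) => //.
  apply/allP => x xs /=; exact: (@leq_bigmax_seq _ s xpredT (fun x : {poly K} * {poly K} => size x.1) x xs).
by move=> hv; apply: hv.
Qed.

End Vp.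
End Mod.


Theorem mainTheorem13 (R : realType) (f u : {poly R[i]})
  (hfu : f = 2%:R^-1 *: (u \Po ('X + 1) - u))
  (V : lmodType R[i]) (E F H : {linear V -> V})
  (hrel : Rf_relations f E F H)
  (e : R[i]) (he : e != 0) (w : V)
  (hwh : whittaker_cyclic E F H e w)
  (hind : indecomposable E F H)
  (p : {poly R[i]}) (hp : irreducible_poly p) (n : nat) (hn : (1 <= n)%N)
  (hZ : forall q : {poly R[i]},
          (forall v : V, opeval q (Omega u E F H) v = 0) <-> (p ^+ n %| q)) :
  forall V' : V -> Prop, submod E F H V' ->
    exists i : nat, (i <= n)%N /\
      forall v, V' v <-> gen E F H (opeval (p ^+ i) (Omega u E F H) w) v.
Proof.
move=> V' hV'; case: hwh => hw hgen.
have hZ' : forall q, p ^+ n %| q -> forall v, opeval q (Omega u E F H) v = 0.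
  by move=> q hq; apply/(hZ q).
exact: (main_sec (islin_lin E) (islin_lin F) (islin_lin H) hfu hrel he hw hgen hV' hp hZ').
Qed.
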